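(* In the setting below, suppose the marching-scale functions have the form $u(s,t,q)=l(s)U(t,q)$, $v(s,t,q)=m(s)V(t,q)$, $w(s,t,q)=n(s)W(t,q)$, $x(s,t,q)=p(s)X(t,q)$ with $l,m,n,p,U,V,W,X$ of class $C^1$ and $l(s),m(s),n(s),p(s)\neq0$ for all $s\in[L_1,L_2]$. Then $\mathbf r$ is an isogeodesic of $\mathbf P$ at $(t_0,q_0)$ if and only if $$U(t_0,q_0)=V(t_0,q_0)=W(t_0,q_0)=X(t_0,q_0)=0,\quad \frac{\partial V}{\partial t}(t_0,q_0)=\frac{\partial V}{\partial q}(t_0,q_0)=0,$$ $$\frac{\partial W}{\partial t}(t_0,q_0)\frac{\partial X}{\partial q}(t_0,q_0)-\frac{\partial W}{\partial q}(t_0,q_0)\frac{\partial X}{\partial t}(t_0,q_0)\neq0.$$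
   Context: $\mathbf r:[L_1,L_2]\to\mathbb R^4$ is an arc-length curve with Frenet frame $\{\mathbf T,\mathbf N,\mathbf B_1,\mathbf B_2\}$ (orthonormal, $\mathbf T=\mathbf r'$, $\mathbf T'=k_1\mathbf N$, $\mathbf N'=-k_1\mathbf T+k_2\mathbf B_1$, $\mathbf B_1'=-k_2\mathbf N+k_3\mathbf B_2$, $\mathbf B_2'=-k_3\mathbf B_1$, $k_1>0$), and $\mathbf P(s,t,q)=\mathbf r(s)+u\mathbf T(s)+v\mathbf N(s)+w\mathbf B_1(s)+x\mathbf B_2(s)$ on $[L_1,L_2]\times[T_1,T_2]\times[Q_1,Q_2]$, with $t_0\in[T_1,T_2]$, $q_0\in[Q_1,Q_2]$ fixed. ''$\mathbf r$ is an isogeodesic of $\mathbf P$ at $(t_0,q_0)$'' means: $\mathbf P(s,t_0,q_0)=\mathbf r(s)$ for all $s$, $\partial_s\mathbf P,\partial_t\mathbf P,\partial_q\mathbf P$ are linearly independent at $(s,t_0,q_0)$, and $\mathbf N(s)$ is parallel to the normal $\partial_s\mathbf P\otimes\partial_t\mathbf P\otimes\partial_q\mathbf P$ (four-dimensional vector product) at $(s,t_0,q_0)$, for all $s$. *)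

(* Defs.v *)
From Stdlib Require Import Reals.
Open Scope R_scope.

Record Vec4 := mk4 { c0 : R; c1 : R; c2 : R; c3 : R }.

Definition vadd (a b : Vec4) : Vec4 :=
  mk4 (c0 a + c0 b) (c1 a + c1 b) (c2 a + c2 b) (c3 a + c3 b).
Definition vscal (k : R) (a : Vec4) : Vec4 :=
  mk4 (k * c0 a) (k * c1 a) (k * c2 a) (k * c3 a).
Definition vzero : Vec4 := mk4 0 0 0 0.
Definition dot4 (a b : Vec4) : R :=
  c0 a * c0 b + c1 a * c1 b + c2 a * c2 b + c3 a * c3 b.

Definition det3 (a1 a2 a3 b1 b2 b3 d1 d2 d3 : R) : R :=
  a1 * (b2 * d3 - b3 * d2) - a2 * (b1 * d3 - b3 * d1) + a3 * (b1 * d2 - b2 * d1).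

(* Four-dimensional vector product a (x) b (x) c, i.e. the formal determinant
   det [e1 e2 e3 e4; a; b; c] expanded along the first row. *)
Definition cross4 (a b c : Vec4) : Vec4 :=
  mk4
    (  det3 (c1 a) (c2 a) (c3 a) (c1 b) (c2 b) (c3 b) (c1 c) (c2 c) (c3 c))
    (- det3 (c0 a) (c2 a) (c3 a) (c0 b) (c2 b) (c3 b) (c0 c) (c2 c) (c3 c))
    (  det3 (c0 a) (c1 a) (c3 a) (c0 b) (c1 b) (c3 b) (c0 c) (c1 c) (c3 c))
    (- det3 (c0 a) (c1 a) (c2 a) (c0 b) (c1 b) (c2 b) (c0 c) (c1 c) (c2 c)).

Definition lin_indep3 (a b c : Vec4) : Prop :=
  forall x y z : R,
    vadd (vscal x a) (vadd (vscal y b) (vscal z c)) = vzero ->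
    x = 0 /\ y = 0 /\ z = 0.

Definition parallel4 (a b : Vec4) : Prop := exists k : R, a = vscal k b.

Definition in_cl (a b x : R) : Prop := a <= x <= b.

(* derivative of f at x relative to the domain D (one-sided at endpoints) *)
Definition deriv_within (D : R -> Prop) (f : R -> R) (x l : R) : Prop :=
  forall eps : R, 0 < eps -> exists delta : R, 0 < delta /\
    forall h : R, h <> 0 -> Rabs h < delta -> D (x + h) ->
      Rabs ((f (x + h) - f x) / h - l) < eps.

Definition vderiv_within (D : R -> Prop) (F : R -> Vec4) (x : R) (L : Vec4) : Prop :=
  deriv_within D (fun y => c0 (F y)) x (c0 L) /\
  deriv_within D (fun y => c1 (F y)) x (c1 L) /\
  deriv_within D (fun y => c2 (F y)) x (c2 L) /\
  deriv_within D (fun y => c3 (F y)) x (c3 L).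

Definition cont_on (D : R -> Prop) (f : R -> R) : Prop :=
  forall x, D x -> forall eps, 0 < eps -> exists delta, 0 < delta /\
    forall y, D y -> Rabs (y - x) < delta -> Rabs (f y - f x) < eps.

Definition cont2_on (D1 D2 : R -> Prop) (f : R -> R -> R) : Prop :=
  forall t q, D1 t -> D2 q -> forall eps, 0 < eps -> exists delta, 0 < delta /\
    forall t' q', D1 t' -> D2 q' -> Rabs (t' - t) < delta -> Rabs (q' - q) < delta ->
      Rabs (f t' q' - f t q) < eps.

Definition C1_on (D : R -> Prop) (f f' : R -> R) : Prop :=
  (forall x, D x -> deriv_within D f x (f' x)) /\ cont_on D f'.

Definition C1_on2 (D1 D2 : R -> Prop) (F Ft Fq : R -> R -> R) : Prop :=
  (forall t q, D1 t -> D2 q ->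
     deriv_within D1 (fun t' => F t' q) t (Ft t q) /\
     deriv_within D2 (fun q' => F t q') q (Fq t q)) /\
  cont2_on D1 D2 Ft /\ cont2_on D1 D2 Fq.

Definition orthonormal4 (T N B1 B2 : Vec4) : Prop :=
  dot4 T T = 1 /\ dot4 N N = 1 /\ dot4 B1 B1 = 1 /\ dot4 B2 B2 = 1 /\
  dot4 T N = 0 /\ dot4 T B1 = 0 /\ dot4 T B2 = 0 /\
  dot4 N B1 = 0 /\ dot4 N B2 = 0 /\ dot4 B1 B2 = 0.

Definition frenet4 (L1 L2 : R) (r T N B1 B2 : R -> Vec4) (k1 k2 k3 : R -> R) : Prop :=
  forall s, in_cl L1 L2 s ->
    orthonormal4 (T s) (N s) (B1 s) (B2 s) /\
    0 < k1 s /\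
    vderiv_within (in_cl L1 L2) r s (T s) /\
    vderiv_within (in_cl L1 L2) T s (vscal (k1 s) (N s)) /\
    vderiv_within (in_cl L1 L2) N s
      (vadd (vscal (- k1 s) (T s)) (vscal (k2 s) (B1 s))) /\
    vderiv_within (in_cl L1 L2) B1 s
      (vadd (vscal (- k2 s) (N s)) (vscal (k3 s) (B2 s))) /\
    vderiv_within (in_cl L1 L2) B2 s (vscal (- k3 s) (B1 s)).

Definition marching (r T N B1 B2 : R -> Vec4) (u v w x : R -> R -> R -> R)
  (s t q : R) : Vec4 :=
  vadd (r s) (vadd (vscal (u s t q) (T s)) (vadd (vscal (v s t q) (N s))
    (vadd (vscal (w s t q) (B1 s)) (vscal (x s t q) (B2 s))))).

Definition isogeodesic (L1 L2 T1 T2 Q1 Q2 t0 q0 : R)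
  (P : R -> R -> R -> Vec4) (r N : R -> Vec4) : Prop :=
  forall s, in_cl L1 L2 s ->
    P s t0 q0 = r s /\
    exists Ps Pt Pq : Vec4,
      vderiv_within (in_cl L1 L2) (fun s' => P s' t0 q0) s Ps /\
      vderiv_within (in_cl T1 T2) (fun t => P s t q0) t0 Pt /\
      vderiv_within (in_cl Q1 Q2) (fun q => P s t0 q) q0 Pq /\
      lin_indep3 Ps Pt Pq /\
      parallel4 (cross4 Ps Pt Pq) (N s).

(* Main.v *)
Require Import Defs.
From Stdlib Require Import Reals Lra Psatz.
Open Scope R_scope.
Definition det4m (a11 a12 a13 a14 a21 a22 a23 a24 a31 a32 a33 a34 a41 a42 a43 a44 : R) : R :=
  a11 * det3 a22 a23 a24 a32 a33 a34 a42 a43 a44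
  - a12 * det3 a21 a23 a24 a31 a33 a34 a41 a43 a44
  + a13 * det3 a21 a22 a24 a31 a32 a34 a41 a42 a44
  - a14 * det3 a21 a22 a23 a31 a32 a33 a41 a42 a43.
Lemma gram4 : forall a b c d : Vec4,
  (dot4 (cross4 b c d) a)^2 = det4m (dot4 a a) (dot4 a b) (dot4 a c) (dot4 a d)
     (dot4 b a) (dot4 b b) (dot4 b c) (dot4 b d)
     (dot4 c a) (dot4 c b) (dot4 c c) (dot4 c d)
     (dot4 d a) (dot4 d b) (dot4 d c) (dot4 d d).
Proof. intros [a0 a1 a2 a3] [b0 b1 b2 b3] [c0 c1 c2 c3] [d0 d1 d2 d3].
unfold det4m, det3, dot4, cross4, det3; simpl. ring. Qed.
Lemma gram3 : forall a b c : Vec4,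
  dot4 (cross4 a b c) (cross4 a b c) = det3 (dot4 a a) (dot4 a b) (dot4 a c)
     (dot4 b a) (dot4 b b) (dot4 b c) (dot4 c a) (dot4 c b) (dot4 c c).
Proof. intros [a0 a1 a2 a3] [b0 b1 b2 b3] [c0 c1 c2 c3].
unfold det3, dot4, cross4, det3; simpl. ring. Qed.
Lemma dot4_sym : forall a b, dot4 a b = dot4 b a.
Proof. intros; unfold dot4; ring. Qed.

Lemma sq4 : forall a b c d : R, a*a+b*b+c*c+d*d = 0 -> a=0/\b=0/\c=0/\d=0.
Proof. intros. repeat split; nra. Qed.

Lemma norm_zero : forall C d j, dot4 C C = 1 -> dot4 d d = 1 -> dot4 C d = j -> j^2 = 1 ->
  C = vscal j d.
Proof.
intros [x0 x1 x2 x3] [d0 d1 d2 d3] j H1 H2 H3 H4.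
assert (E: (x0 - j*d0)*(x0 - j*d0) + (x1 - j*d1)*(x1 - j*d1) + (x2 - j*d2)*(x2 - j*d2)
  + (x3 - j*d3)*(x3 - j*d3) = dot4 (mk4 x0 x1 x2 x3) (mk4 x0 x1 x2 x3)
   - 2*j*dot4 (mk4 x0 x1 x2 x3) (mk4 d0 d1 d2 d3) + j*j*dot4 (mk4 d0 d1 d2 d3) (mk4 d0 d1 d2 d3))
  by (unfold dot4; simpl; ring).
rewrite H1, H2, H3 in E.
assert (E2 : 1 - 2*j*j + j*j*1 = 0) by nra.
rewrite E2 in E. apply sq4 in E. destruct E as [? [? [? ?]]].
unfold vscal; simpl; f_equal; lra.
Qed.

Lemma frame_k2 : forall T N B1 B2, orthonormal4 T N B1 B2 ->
  (dot4 (cross4 T B1 B2) N)^2 = 1.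
Proof.
intros T N B1 B2 (h1&h2&h3&h4&h5&h6&h7&h8&h9&h10).
rewrite gram4. rewrite (dot4_sym N T), (dot4_sym B1 N), (dot4_sym B2 N), (dot4_sym B1 T),
 (dot4_sym B2 T), (dot4_sym B2 B1).
rewrite h1,h2,h3,h4,h5,h6,h7,h8,h9,h10. unfold det4m, det3; ring.
Qed.

Lemma cross_frame : forall a b c d, dot4 a a = 1 -> dot4 b b = 1 -> dot4 c c = 1 ->
  dot4 a b = 0 -> dot4 a c = 0 -> dot4 b c = 0 -> dot4 d d = 1 ->
  (dot4 (cross4 a b c) d)^2 = 1 -> cross4 a b c = vscal (dot4 (cross4 a b c) d) d.
Proof.
intros a b c d h1 h2 h3 h4 h5 h6 h7 h8. apply norm_zero; auto.
rewrite gram3. rewrite (dot4_sym b a), (dot4_sym c a), (dot4_sym c b), h1,h2,h3,h4,h5,h6.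
unfold det3; ring.
Qed.

Definition comb (a b c d : R) (T N B1 B2 : Vec4) : Vec4 :=
  vadd (vscal a T) (vadd (vscal b N) (vadd (vscal c B1) (vscal d B2))).

Lemma frame_coords : forall T N B1 B2 a b c d, orthonormal4 T N B1 B2 ->
  comb a b c d T N B1 B2 = vzero -> a=0/\b=0/\c=0/\d=0.
Proof.
intros [t0 t1 t2 t3] [n0 n1 n2 n3] [e0 e1 e2 e3] [f0 f1 f2 f3] a b c d
  (h1&h2&h3&h4&h5&h6&h7&h8&h9&h10) H.
unfold comb, vadd, vscal, vzero in H; simpl in H. injection H as E0 E1 E2 E3.
unfold dot4 in *; simpl in *.
repeat split.
- assert (Q: a*(t0*t0+t1*t1+t2*t2+t3*t3) + b*(t0*n0+t1*n1+t2*n2+t3*n3)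
   + c*(t0*e0+t1*e1+t2*e2+t3*e3) + d*(t0*f0+t1*f1+t2*f2+t3*f3) =
   t0*(a * t0 + (b * n0 + (c * e0 + d * f0))) + t1*(a * t1 + (b * n1 + (c * e1 + d * f1)))
   + t2*(a * t2 + (b * n2 + (c * e2 + d * f2))) + t3*(a * t3 + (b * n3 + (c * e3 + d * f3))))
   by ring.
  rewrite h1,h5,h6,h7,E0,E1,E2,E3 in Q. lra.
- assert (Q: a*(t0*n0+t1*n1+t2*n2+t3*n3) + b*(n0*n0+n1*n1+n2*n2+n3*n3)
   + c*(n0*e0+n1*e1+n2*e2+n3*e3) + d*(n0*f0+n1*f1+n2*f2+n3*f3) =
   n0*(a * t0 + (b * n0 + (c * e0 + d * f0))) + n1*(a * t1 + (b * n1 + (c * e1 + d * f1)))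
   + n2*(a * t2 + (b * n2 + (c * e2 + d * f2))) + n3*(a * t3 + (b * n3 + (c * e3 + d * f3))))
   by ring.
  rewrite h2,h5,h8,h9,E0,E1,E2,E3 in Q. lra.
- assert (Q: a*(t0*e0+t1*e1+t2*e2+t3*e3) + b*(n0*e0+n1*e1+n2*e2+n3*e3)
   + c*(e0*e0+e1*e1+e2*e2+e3*e3) + d*(e0*f0+e1*f1+e2*f2+e3*f3) =
   e0*(a * t0 + (b * n0 + (c * e0 + d * f0))) + e1*(a * t1 + (b * n1 + (c * e1 + d * f1)))
   + e2*(a * t2 + (b * n2 + (c * e2 + d * f2))) + e3*(a * t3 + (b * n3 + (c * e3 + d * f3))))
   by ring.
  rewrite h3,h6,h8,h10,E0,E1,E2,E3 in Q. lra.
- assert (Q: a*(t0*f0+t1*f1+t2*f2+t3*f3) + b*(n0*f0+n1*f1+n2*f2+n3*f3)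
   + c*(e0*f0+e1*f1+e2*f2+e3*f3) + d*(f0*f0+f1*f1+f2*f2+f3*f3) =
   f0*(a * t0 + (b * n0 + (c * e0 + d * f0))) + f1*(a * t1 + (b * n1 + (c * e1 + d * f1)))
   + f2*(a * t2 + (b * n2 + (c * e2 + d * f2))) + f3*(a * t3 + (b * n3 + (c * e3 + d * f3))))
   by ring.
  rewrite h4,h7,h9,h10,E0,E1,E2,E3 in Q. lra.
Qed.

Lemma cross_expand : forall T N B1 B2 a1 a2 a3 a4 b1 b2 b3 b4,
  cross4 T (comb a1 a2 a3 a4 T N B1 B2) (comb b1 b2 b3 b4 T N B1 B2) =
  vadd (vscal (a2*b3 - a3*b2) (cross4 T N B1))
   (vadd (vscal (a2*b4 - a4*b2) (cross4 T N B2)) (vscal (a3*b4 - a4*b3) (cross4 T B1 B2))).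
Proof.
intros [t0 t1 t2 t3] [n0 n1 n2 n3] [e0 e1 e2 e3] [f0 f1 f2 f3] *.
unfold comb, cross4, vadd, vscal, det3; simpl; f_equal; ring.
Qed.

Lemma sign1 : forall T N B1 B2, dot4 (cross4 T N B1) B2 = dot4 (cross4 T B1 B2) N.
Proof. intros [t0 t1 t2 t3] [n0 n1 n2 n3] [e0 e1 e2 e3] [f0 f1 f2 f3].
unfold dot4, cross4, det3; simpl; ring. Qed.
Lemma sign2 : forall T N B1 B2, dot4 (cross4 T N B2) B1 = - dot4 (cross4 T B1 B2) N.
Proof. intros [t0 t1 t2 t3] [n0 n1 n2 n3] [e0 e1 e2 e3] [f0 f1 f2 f3].
unfold dot4, cross4, det3; simpl; ring. Qed.

Lemma lin_comb : forall T N B1 B2 x y z a1 a2 a3 a4 b1 b2 b3 b4,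
  vadd (vscal x T) (vadd (vscal y (comb a1 a2 a3 a4 T N B1 B2)) (vscal z (comb b1 b2 b3 b4 T N B1 B2)))
  = comb (x + y*a1 + z*b1) (y*a2+z*b2) (y*a3+z*b3) (y*a4+z*b4) T N B1 B2.
Proof.
intros [t0 t1 t2 t3] [n0 n1 n2 n3] [e0 e1 e2 e3] [f0 f1 f2 f3] *.
unfold comb, vadd, vscal; simpl; f_equal; ring.
Qed.

Lemma comb0 : forall T N B1 B2, comb 0 0 0 0 T N B1 B2 = vzero.
Proof. intros [t0 t1 t2 t3] [n0 n1 n2 n3] [e0 e1 e2 e3] [f0 f1 f2 f3].
unfold comb, vadd, vscal, vzero; simpl; f_equal; ring. Qed.

Lemma par_comb : forall T N B1 B2 al be ga de ep ka kk,
  vadd (vscal al (vscal be B2)) (vadd (vscal ga (vscal de B1)) (vscal ep (vscal ka N))) = vscal kk N ->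
  comb 0 (ep*ka - kk) (ga*de) (al*be) T N B1 B2 = vzero.
Proof.
intros [t0 t1 t2 t3] [n0 n1 n2 n3] [e0 e1 e2 e3] [f0 f1 f2 f3] al be ga de ep ka kk H.
unfold comb, vadd, vscal, vzero in *; simpl in *. injection H; intros; f_equal; nra.
Qed.

Lemma deriv_ext : forall D f g x l, (forall y, f y = g y) ->
  deriv_within D f x l -> deriv_within D g x l.
Proof. intros D f g x l E H eps He. destruct (H eps He) as [d [Hd H']].
exists d; split; auto. intros h h0 hd hD. rewrite <- !E. auto. Qed.

Lemma deriv_ext_D : forall D f g x l, D x -> (forall y, D y -> f y = g y) ->
  deriv_within D f x l -> deriv_within D g x l.
Proof. intros D f g x l Dx E H eps He. destruct (H eps He) as [d [Hd H']].
exists d; split; auto. intros h h0 hd hD. rewrite <- !E; auto. Qed.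

Lemma deriv_const : forall D c x, deriv_within D (fun _ => c) x 0.
Proof. intros D c x eps He. exists 1; split; [lra|]. intros.
replace ((c - c)/h - 0) with 0 by (field; auto). rewrite Rabs_R0; auto. Qed.

Lemma deriv_plus : forall D f g x a b, deriv_within D f x a -> deriv_within D g x b ->
  deriv_within D (fun y => f y + g y) x (a + b).
Proof.
intros D f g x a b Hf Hg eps He.
destruct (Hf (eps/2)) as [d1 [Hd1 H1]]; [lra|].
destruct (Hg (eps/2)) as [d2 [Hd2 H2]]; [lra|].
exists (Rmin d1 d2); split; [apply Rmin_pos; auto|].
intros h h0 hd hD.
assert (A1 := H1 h h0 (Rlt_le_trans _ _ _ hd (Rmin_l _ _)) hD).
assert (A2 := H2 h h0 (Rlt_le_trans _ _ _ hd (Rmin_r _ _)) hD).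
replace ((f (x + h) + g (x + h) - (f x + g x)) / h - (a + b)) with
  (((f (x + h) - f x) / h - a) + ((g (x + h) - g x) / h - b)) by (unfold Rdiv; ring).
eapply Rle_lt_trans; [apply Rabs_triang|]. lra.
Qed.

Lemma deriv_scal : forall D f x a c, deriv_within D f x a ->
  deriv_within D (fun y => c * f y) x (c * a).
Proof.
intros D f x a c Hf eps He.
assert (Hc : 0 < Rabs c + 1) by (pose proof (Rabs_pos c); lra).
destruct (Hf (eps/(Rabs c + 1))) as [d [Hd H1]].
{ apply Rdiv_lt_0_compat; lra. }
exists d; split; auto. intros h h0 hd hD.
assert (A := H1 h h0 hd hD).
replace ((c * f (x + h) - c * f x) / h - c * a) with
  (c * ((f (x + h) - f x) / h - a)) by (unfold Rdiv; ring).
rewrite Rabs_mult.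
set (e := Rabs ((f (x + h) - f x) / h - a)) in *.
assert (0 <= e) by apply Rabs_pos.
assert (Rabs c * e <= (Rabs c + 1) * e) by nra.
assert ((Rabs c + 1) * e < (Rabs c + 1) * (eps / (Rabs c + 1))) by (apply Rmult_lt_compat_l; lra).
replace ((Rabs c + 1) * (eps / (Rabs c + 1))) with eps in * by (field; lra).
lra.
Qed.

Lemma deriv_lin4 : forall D x A e1 e2 e3 e4 g1 g2 g3 g4 f1 f2 f3 f4 d1 d2 d3 d4,
  deriv_within D f1 x d1 -> deriv_within D f2 x d2 ->
  deriv_within D f3 x d3 -> deriv_within D f4 x d4 ->
  deriv_within D (fun y => A + (e1 * f1 y * g1 + (e2 * f2 y * g2 + (e3 * f3 y * g3 + e4 * f4 y * g4))))
    x (e1 * d1 * g1 + (e2 * d2 * g2 + (e3 * d3 * g3 + e4 * d4 * g4))).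
Proof.
intros.
replace (e1 * d1 * g1 + (e2 * d2 * g2 + (e3 * d3 * g3 + e4 * d4 * g4))) with
  (0 + ((e1*g1) * d1 + ((e2*g2)*d2 + ((e3*g3)*d3 + (e4*g4)*d4)))) by ring.
apply deriv_ext with (f := fun y => A + ((e1*g1) * f1 y + ((e2*g2)*f2 y + ((e3*g3)*f3 y + (e4*g4)*f4 y)))).
{ intros y; simpl; ring. }
apply deriv_plus; [apply deriv_const|
  apply deriv_plus; [apply deriv_scal; eassumption|
  apply deriv_plus; [apply deriv_scal; eassumption|
  apply deriv_plus; apply deriv_scal; eassumption]]].
Qed.
Lemma exists_h : forall a b x d, a < b -> in_cl a b x -> 0 < d ->
  exists h, h <> 0 /\ Rabs h < d /\ in_cl a b (x + h).
Proof.
intros a b x d Hab [Hx1 Hx2] Hd. unfold in_cl.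
destruct (Rlt_le_dec x b).
- exists (Rmin (d/2) (b - x)).
  assert (0 < Rmin (d/2) (b-x)) by (apply Rmin_pos; lra).
  pose proof (Rmin_l (d/2) (b-x)); pose proof (Rmin_r (d/2) (b-x)).
  rewrite Rabs_pos_eq by lra. repeat split; lra.
- exists (- Rmin (d/2) (b - a)).
  assert (0 < Rmin (d/2) (b-a)) by (apply Rmin_pos; lra).
  pose proof (Rmin_l (d/2) (b-a)); pose proof (Rmin_r (d/2) (b-a)).
  rewrite Rabs_Ropp, Rabs_pos_eq by lra. repeat split; lra.
Qed.

Lemma deriv_unique : forall a b f x l1 l2, a < b -> in_cl a b x ->
  deriv_within (in_cl a b) f x l1 -> deriv_within (in_cl a b) f x l2 -> l1 = l2.
Proof.
intros a b f x l1 l2 Hab Hx H1 H2.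
destruct (Req_dec l1 l2) as [|Hne]; auto. exfalso.
assert (Hp : 0 < Rabs (l1 - l2) / 2) by (apply Rdiv_lt_0_compat; [apply Rabs_pos_lt; lra| lra]).
destruct (H1 _ Hp) as [d1 [Hd1 A1]]. destruct (H2 _ Hp) as [d2 [Hd2 A2]].
destruct (exists_h a b x (Rmin d1 d2) Hab Hx (Rmin_pos _ _ Hd1 Hd2)) as [h [h0 [hd hD]]].
assert (B1 := A1 h h0 (Rlt_le_trans _ _ _ hd (Rmin_l _ _)) hD).
assert (B2 := A2 h h0 (Rlt_le_trans _ _ _ hd (Rmin_r _ _)) hD).
set (Q := (f (x + h) - f x) / h) in *.
assert (Rabs (l1 - l2) <= Rabs (Q - l2) + Rabs (Q - l1)).
{ replace (l1 - l2) with ((Q - l2) + - (Q - l1)) by ring.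
  eapply Rle_trans; [apply Rabs_triang|]. rewrite Rabs_Ropp; lra. }
lra.
Qed.

Lemma vderiv_unique : forall a b F x L1 L2, a < b -> in_cl a b x ->
  vderiv_within (in_cl a b) F x L1 -> vderiv_within (in_cl a b) F x L2 -> L1 = L2.
Proof.
intros a b F x [p0 p1 p2 p3] [q0 q1 q2 q3] Hab Hx (A0&A1&A2&A3) (B0&B1&B2&B3).
simpl in *. f_equal; eapply deriv_unique; eauto.
Qed.

Lemma vderiv_ext_D : forall D F G x L, D x -> (forall y, D y -> F y = G y) ->
  vderiv_within D F x L -> vderiv_within D G x L.
Proof.
intros D F G x L Dx E (A0&A1&A2&A3).
split; [|split; [|split]].
- apply (deriv_ext_D D (fun y => c0 (F y))); auto; intros y Dy; rewrite E; auto.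
- apply (deriv_ext_D D (fun y => Defs.c1 (F y))); auto; intros y Dy; rewrite E; auto.
- apply (deriv_ext_D D (fun y => c2 (F y))); auto; intros y Dy; rewrite E; auto.
- apply (deriv_ext_D D (fun y => c3 (F y))); auto; intros y Dy; rewrite E; auto.
Qed.

Lemma minors_indep : forall T N B1 B2 a1 a2 a3 a4 b1 b2 b3 b4,
  lin_indep3 T (comb a1 a2 a3 a4 T N B1 B2) (comb b1 b2 b3 b4 T N B1 B2) ->
  a2*b3 - a3*b2 = 0 -> a2*b4 - a4*b2 = 0 -> a3*b4 - a4*b3 <> 0.
Proof.
intros T N B1 B2 a1 a2 a3 a4 b1 b2 b3 b4 HL m23 m24 m34.
assert (K : forall y z, y*a2+z*b2 = 0 -> y*a3+z*b3 = 0 -> y*a4+z*b4 = 0 -> y = 0 /\ z = 0).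
{ intros y z e2 e3 e4. destruct (HL (-(y*a1+z*b1)) y z) as (_&?&?); auto.
  rewrite lin_comb. rewrite e2, e3, e4. replace (- (y * a1 + z * b1) + y * a1 + z * b1) with 0 by ring.
  apply comb0. }
destruct (Req_dec b2 0) as [h2|h2].
2:{ destruct (K b2 (-a2)); try nra. }
destruct (Req_dec b3 0) as [h3|h3].
2:{ destruct (K b3 (-a3)); try nra. }
destruct (Req_dec b4 0) as [h4|h4].
2:{ destruct (K b4 (-a4)); try nra. }
destruct (K 0 1); subst; try lra.
Qed.

Theorem mainTheorem2
  (L1 L2 T1 T2 Q1 Q2 t0 q0 : R)
  (r T N B1 B2 : R -> Vec4) (k1 k2 k3 : R -> R)
  (l m n p l' m' n' p' : R -> R)
  (U V W X Ut Uq Vt Vq Wt Wq Xt Xq : R -> R -> R) :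
  L1 < L2 -> T1 < T2 -> Q1 < Q2 ->
  in_cl T1 T2 t0 -> in_cl Q1 Q2 q0 ->
  frenet4 L1 L2 r T N B1 B2 k1 k2 k3 ->
  C1_on (in_cl L1 L2) l l' -> C1_on (in_cl L1 L2) m m' ->
  C1_on (in_cl L1 L2) n n' -> C1_on (in_cl L1 L2) p p' ->
  C1_on2 (in_cl T1 T2) (in_cl Q1 Q2) U Ut Uq ->
  C1_on2 (in_cl T1 T2) (in_cl Q1 Q2) V Vt Vq ->
  C1_on2 (in_cl T1 T2) (in_cl Q1 Q2) W Wt Wq ->
  C1_on2 (in_cl T1 T2) (in_cl Q1 Q2) X Xt Xq ->
  (forall s, in_cl L1 L2 s -> l s <> 0 /\ m s <> 0 /\ n s <> 0 /\ p s <> 0) ->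
  (isogeodesic L1 L2 T1 T2 Q1 Q2 t0 q0
     (marching r T N B1 B2
        (fun s t q => l s * U t q) (fun s t q => m s * V t q)
        (fun s t q => n s * W t q) (fun s t q => p s * X t q))
     r N
   <->
   (U t0 q0 = 0 /\ V t0 q0 = 0 /\ W t0 q0 = 0 /\ X t0 q0 = 0 /\
    Vt t0 q0 = 0 /\ Vq t0 q0 = 0 /\
    Wt t0 q0 * Xq t0 q0 - Wq t0 q0 * Xt t0 q0 <> 0)).
Proof.
intros HL HT HQ Ht0 Hq0 Hfr _ _ _ _ HU HV HW HX Hnz.
set (P := marching r T N B1 B2
        (fun s t q => l s * U t q) (fun s t q => m s * V t q)
        (fun s t q => n s * W t q) (fun s t q => p s * X t q)).
destruct HU as [HU _]; destruct HV as [HV _]; destruct HW as [HW _]; destruct HX as [HX _].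
destruct (HU t0 q0 Ht0 Hq0) as [HUt HUq].
destruct (HV t0 q0 Ht0 Hq0) as [HVt HVq].
destruct (HW t0 q0 Ht0 Hq0) as [HWt HWq].
destruct (HX t0 q0 Ht0 Hq0) as [HXt HXq].
assert (DPt : forall s, vderiv_within (in_cl T1 T2) (fun t => P s t q0) t0
   (comb (l s * Ut t0 q0) (m s * Vt t0 q0) (n s * Wt t0 q0) (p s * Xt t0 q0) (T s) (N s) (B1 s) (B2 s))).
{ intros s. unfold vderiv_within, P, marching, comb; simpl.
  repeat split; apply deriv_lin4; assumption. }
assert (DPq : forall s, vderiv_within (in_cl Q1 Q2) (fun q => P s t0 q) q0
   (comb (l s * Uq t0 q0) (m s * Vq t0 q0) (n s * Wq t0 q0) (p s * Xq t0 q0) (T s) (N s) (B1 s) (B2 s))).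
{ intros s. unfold vderiv_within, P, marching, comb; simpl.
  repeat split; apply deriv_lin4; assumption. }
assert (HsL : in_cl L1 L2 L1) by (unfold in_cl; lra).
split.
- intros Hiso.
  destruct (Hfr L1 HsL) as (Hon & _ & Hr' & _).
  destruct (Hiso L1 HsL) as [Heq [Ps [Pt [Pq (DS & DT & DQ & Hli & Hpar)]]]].
  destruct (Hnz L1 HsL) as (nl & nm & nn & np).
  assert (Hc : comb (l L1 * U t0 q0) (m L1 * V t0 q0) (n L1 * W t0 q0) (p L1 * X t0 q0)
      (T L1) (N L1) (B1 L1) (B2 L1) = vzero).
  { revert Heq. unfold P, marching, comb. destruct (r L1).
    unfold vadd, vscal, vzero; simpl. intros E; injection E; intros; f_equal; lra. }
  apply frame_coords in Hc; auto. destruct Hc as (e1&e2&e3&e4).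
  assert (U t0 q0 = 0) by (destruct (Rmult_integral _ _ e1); tauto).
  assert (V t0 q0 = 0) by (destruct (Rmult_integral _ _ e2); tauto).
  assert (W t0 q0 = 0) by (destruct (Rmult_integral _ _ e3); tauto).
  assert (X t0 q0 = 0) by (destruct (Rmult_integral _ _ e4); tauto).
  assert (EPs : Ps = T L1).
  { eapply vderiv_unique; [exact HL| exact HsL| exact DS|].
    eapply vderiv_ext_D; [exact HsL| |exact Hr'].
    intros y Hy. destruct (Hiso y Hy); auto. }
  rewrite (vderiv_unique _ _ _ _ _ _ HT Ht0 DT (DPt L1)) in Hli, Hpar.
  rewrite (vderiv_unique _ _ _ _ _ _ HQ Hq0 DQ (DPq L1)) in Hli, Hpar.
  rewrite EPs in Hli, Hpar.
  destruct Hpar as [kk Hpar].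
  rewrite cross_expand in Hpar.
  pose proof Hon as (h1&h2&h3&h4&h5&h6&h7&h8&h9&h10).
  pose proof (frame_k2 _ _ _ _ Hon) as Hk.
  set (k := dot4 (cross4 (T L1) (B1 L1) (B2 L1)) (N L1)) in *.
  assert (C1 : cross4 (T L1) (B1 L1) (B2 L1) = vscal k (N L1)) by (apply cross_frame; auto).
  assert (C2 : cross4 (T L1) (N L1) (B1 L1) = vscal (dot4 (cross4 (T L1) (N L1) (B1 L1)) (B2 L1)) (B2 L1))
    by (apply cross_frame; auto; rewrite sign1; auto).
  assert (C3 : cross4 (T L1) (N L1) (B2 L1) = vscal (dot4 (cross4 (T L1) (N L1) (B2 L1)) (B1 L1)) (B1 L1))
    by (apply cross_frame; auto; rewrite sign2; fold k; nra).
  rewrite C1, C2, C3 in Hpar.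
  assert (S1 : dot4 (cross4 (T L1) (N L1) (B1 L1)) (B2 L1) = k) by apply sign1.
  assert (S2 : dot4 (cross4 (T L1) (N L1) (B2 L1)) (B1 L1) = - k) by apply sign2.
  rewrite S1, S2 in Hpar.
  set (a2 := m L1 * Vt t0 q0) in *. set (b2 := m L1 * Vq t0 q0) in *.
  set (a3 := n L1 * Wt t0 q0) in *. set (b3 := n L1 * Wq t0 q0) in *.
  set (a4 := p L1 * Xt t0 q0) in *. set (b4 := p L1 * Xq t0 q0) in *.
  pose proof (par_comb (T L1) _ _ _ _ _ _ _ _ _ _ Hpar) as Hc.
  apply frame_coords in Hc; auto. destruct Hc as (_&_&f3&f4).
  assert (kn : k <> 0) by (intro; subst; nra).
  assert (m24 : a2*b4 - a4*b2 = 0).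
  { destruct (Rmult_integral _ _ f3) as [G|G]. exact G. exfalso; apply kn; lra. }
  assert (m23 : a2*b3 - a3*b2 = 0) by (destruct (Rmult_integral _ _ f4); [auto| exfalso; apply kn; lra]).
  pose proof (minors_indep _ _ _ _ _ _ _ _ _ _ _ _ Hli m23 m24) as m34.
  assert (a2 * (a3*b4 - a4*b3) = 0) by (replace (a2 * (a3*b4 - a4*b3)) with (a3*(a2*b4-a4*b2) - a4*(a2*b3-a3*b2)) by ring; rewrite m24, m23; ring).
  assert (b2 * (a3*b4 - a4*b3) = 0) by (replace (b2 * (a3*b4 - a4*b3)) with (b3*(a2*b4-a4*b2) - b4*(a2*b3-a3*b2)) by ring; rewrite m24, m23; ring).
  assert (a2 = 0) by (destruct (Rmult_integral _ _ H3); tauto).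
  assert (b2 = 0) by (destruct (Rmult_integral _ _ H4); tauto).
  repeat split; auto.
  + unfold a2 in H5. destruct (Rmult_integral _ _ H5); tauto.
  + unfold b2 in H6. destruct (Rmult_integral _ _ H6); tauto.
  + intro Z. apply m34. unfold a3, a4, b3, b4.
    replace (n L1 * Wt t0 q0 * (p L1 * Xq t0 q0) - p L1 * Xt t0 q0 * (n L1 * Wq t0 q0))
      with (n L1 * p L1 * (Wt t0 q0 * Xq t0 q0 - Wq t0 q0 * Xt t0 q0)) by ring.
    rewrite Z; ring.
- intros (e1&e2&e3&e4&e5&e6&e7) s Hs.
  destruct (Hfr s Hs) as (Hon & _ & Hr' & _).
  destruct (Hnz s Hs) as (nl & nm & nn & np).
  assert (Peq : forall y, P y t0 q0 = r y).
  { intros y. unfold P, marching. rewrite e1, e2, e3, e4. destruct (r y).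
    unfold vadd, vscal; simpl; f_equal; ring. }
  split; [apply Peq|].
  exists (T s), (comb (l s * Ut t0 q0) (m s * Vt t0 q0) (n s * Wt t0 q0) (p s * Xt t0 q0) (T s) (N s) (B1 s) (B2 s)),
    (comb (l s * Uq t0 q0) (m s * Vq t0 q0) (n s * Wq t0 q0) (p s * Xq t0 q0) (T s) (N s) (B1 s) (B2 s)).
  split; [| split; [apply DPt| split; [apply DPq|split]]].
  + eapply vderiv_ext_D; [exact Hs| |exact Hr']. intros y _; auto.
  + intros x y z Hz. rewrite lin_comb in Hz. apply frame_coords in Hz; auto.
    destruct Hz as (z1&_&z3&z4).
    set (D := Wt t0 q0 * Xq t0 q0 - Wq t0 q0 * Xt t0 q0) in *.
    assert (npD : n s * p s * D <> 0) by (repeat apply Rmult_integral_contrapositive_currified; auto).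
    assert (y * (n s * p s * D) = 0).
    { replace (y * (n s * p s * D)) with (p s * Xq t0 q0 * (y * (n s * Wt t0 q0) + z * (n s * Wq t0 q0))
         - n s * Wq t0 q0 * (y * (p s * Xt t0 q0) + z * (p s * Xq t0 q0))) by (unfold D; ring).
      rewrite z3, z4; ring. }
    assert (z * (n s * p s * D) = 0).
    { replace (z * (n s * p s * D)) with (- (p s * Xt t0 q0) * (y * (n s * Wt t0 q0) + z * (n s * Wq t0 q0))
         + n s * Wt t0 q0 * (y * (p s * Xt t0 q0) + z * (p s * Xq t0 q0))) by (unfold D; ring).
      rewrite z3, z4; ring. }
    assert (y = 0) by (destruct (Rmult_integral _ _ H); tauto).
    assert (z = 0) by (destruct (Rmult_integral _ _ H0); tauto).
    subst y z. repeat split; auto. lra.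
  + pose proof (frame_k2 _ _ _ _ Hon) as Hk.
    pose proof Hon as (h1&h2&h3&h4&h5&h6&h7&h8&h9&h10).
    rewrite cross_expand.
    rewrite (cross_frame (T s) (B1 s) (B2 s) (N s)); auto.
    rewrite e5, e6.
    exists ((n s * Wt t0 q0 * (p s * Xq t0 q0) - p s * Xt t0 q0 * (n s * Wq t0 q0)) *
       dot4 (cross4 (T s) (B1 s) (B2 s)) (N s)).
    destruct (cross4 (T s) (N s) (B1 s)), (cross4 (T s) (N s) (B2 s)), (N s).
    unfold vadd, vscal; simpl; f_equal; ring.
Qed.
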